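(* Let $F\in\mathcal{F}^n$ with radial function $\rho$. Then for each $x\in\mathbf{S}^n$ and each $N(x)\in\alpha_F(x)$ there exists a unique $v(x)\in\partial\rho(x)$ such that $$N(x)=\frac{-v(x)+\rho(x)x}{\sqrt{|v(x)|^2+\rho^2(x)}},$$ and $$\alpha_F(x)=\left\{\frac{-v(x)+\rho(x)x}{\sqrt{|v(x)|^2+\rho^2(x)}}:\ v(x)\in\partial\rho(x)\right\}.$$
   Context: $\mathbf{S}^n$ is the unit sphere in $\mathbb{R}^{n+1}$, $n\ge1$, centered at the origin $\mathcal{O}$. $\mathcal{F}^n$ is the set of boundaries of compact convex sets in $\mathbb{R}^{n+1}$ containing $\mathcal{O}$ in their interior; for $F\in\mathcal{F}^n$ its radial function $\rho(x)$ is the distance from $\mathcal{O}$ to the point where the ray in direction $x\in\mathbf{S}^n$ meets $F$, and its generalized Gauss map $\alpha_F(x)$ is the set of outward unit normals of all supporting hyperplanes to $F$ at $\rho(x)x$. For $f\in C(\mathbf{S}^n)$ and $x_0\in\mathbf{S}^n$, with $T\mathbf{S}^n_{x_0}=\{v\in\mathbb{R}^{n+1}:\langle v,x_0\rangle=0\}$, the subdifferential is $\partial f(x_0)=\{v\in T\mathbf{S}^n_{x_0}: f(x)\langle -v+f(x_0)x_0,x\rangle\le f^2(x_0)\ \forall x\in\mathbf{S}^n\}$. *)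

(* Defs.v *)
From HB Require Import structures.
From mathcomp Require Import all_boot all_order all_algebra.
From mathcomp Require Import all_classical all_reals all_analysis.
Set Implicit Arguments. Unset Strict Implicit. Unset Printing Implicit Defensive.
Import Order.TTheory GRing.Theory Num.Theory.
Import numFieldNormedType.Exports.
Local Open Scope classical_set_scope.
Local Open Scope ring_scope.

(* Vectors of R^(n+1) are row vectors 'rV[R]_(n.+1), with the product topology. *)

Definition dotv {R : realType} {k : nat} (u v : 'rV[R]_k) : R :=
  \sum_(i < k) u ord0 i * v ord0 i.

Definition enorm {R : realType} {k : nat} (v : 'rV[R]_k) : R :=
  Num.sqrt (dotv v v).

Definition unit_sphere (R : realType) (n : nat) : set 'rV[R]_(n.+1) :=
  [set x | enorm x = 1].
Arguments unit_sphere : clear implicits.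

Definition convex_set_of {R : realType} {k : nat} (K : set 'rV[R]_k) : Prop :=
  forall x y t, K x -> K y -> 0 <= t <= 1 -> K (t *: x + (1 - t) *: y).

Definition convex_body0 {R : realType} {k : nat} (K : set 'rV[R]_k) : Prop :=
  compact K /\ convex_set_of K /\ (interior K) 0.

Definition boundary {R : realType} {k : nat} (K : set 'rV[R]_k) : set 'rV[R]_k :=
  closure K `\` interior K.

(* rho is the radial function of F = boundary K: for x in S^n, rho x >= 0 and
   rho x * x is the point where the ray in direction x meets F. *)
Definition is_radial_function {R : realType} {n : nat}
  (K : set 'rV[R]_(n.+1)) (rho : 'rV[R]_(n.+1) -> R) : Prop :=
  forall x, unit_sphere R n x -> 0 <= rho x /\ boundary K (rho x *: x).

(* Generalized Gauss map: outward unit normals of supporting hyperplanes to F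
   (equivalently to the convex set K bounded by F) at the point p = rho x * x. *)
Definition gauss_map {R : realType} {n : nat}
  (K : set 'rV[R]_(n.+1)) (rho : 'rV[R]_(n.+1) -> R) (x : 'rV[R]_(n.+1))
  : set 'rV[R]_(n.+1) :=
  [set N | enorm N = 1 /\ forall y, K y -> dotv N y <= dotv N (rho x *: x)].

Definition subdiff {R : realType} {n : nat}
  (f : 'rV[R]_(n.+1) -> R) (x0 : 'rV[R]_(n.+1)) : set 'rV[R]_(n.+1) :=
  [set v | dotv v x0 = 0 /\
     forall x, unit_sphere R n x -> f x * dotv (- v + f x0 *: x0) x <= f x0 ^+ 2].

Definition normal_of {R : realType} {k : nat} (r : R) (x v : 'rV[R]_k) : 'rV[R]_k :=
  (Num.sqrt (enorm v ^+ 2 + r ^+ 2))^-1 *: (- v + r *: x).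

(* Main.v *)
Require Import Defs.
From HB Require Import structures.
From mathcomp Require Import all_boot all_order all_algebra.
From mathcomp Require Import all_classical all_reals all_analysis.
From mathcomp Require Import ring lra.
Import Order.TTheory GRing.Theory Num.Theory.
Import numFieldNormedType.Exports.
Local Open Scope classical_set_scope.
Local Open Scope ring_scope.

Set Implicit Arguments. Unset Strict Implicit.
Section D.
Context {R : realType} {k : nat}.
Implicit Types (u v w : 'rV[R]_k).

Lemma dotvC u v : dotv u v = dotv v u.
Proof. by apply: eq_bigr => i _; rewrite mulrC. Qed.
Lemma dotvDl u w v : dotv (u + w) v = dotv u v + dotv w v.
Proof. by rewrite /dotv -big_split; apply: eq_bigr => i _; rewrite !mxE mulrDl. Qed.
Lemma dotvZl a u v : dotv (a *: u) v = a * dotv u v.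
Proof. by rewrite /dotv mulr_sumr; apply: eq_bigr => i _; rewrite !mxE mulrA. Qed.
Lemma dotvNl u v : dotv (- u) v = - dotv u v.
Proof. by rewrite -scaleN1r dotvZl mulN1r. Qed.
Lemma dotvDr u w v : dotv v (u + w) = dotv v u + dotv v w.
Proof. by rewrite dotvC dotvDl !(dotvC v). Qed.
Lemma dotvZr a u v : dotv v (a *: u) = a * dotv v u.
Proof. by rewrite dotvC dotvZl dotvC. Qed.
Lemma dotvNr u v : dotv v (- u) = - dotv v u.
Proof. by rewrite dotvC dotvNl dotvC. Qed.
Lemma dotv0r v : dotv v 0 = 0.
Proof. by rewrite /dotv big1 // => i _; rewrite mxE mulr0. Qed.
Lemma dotv_ge0 v : 0 <= dotv v v.
Proof. by apply: sumr_ge0 => i _; rewrite -expr2 sqr_ge0. Qed.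
Lemma enorm_ge0 v : 0 <= enorm v.
Proof. exact: sqrtr_ge0. Qed.
Lemma enorm_sq v : enorm v ^+ 2 = dotv v v.
Proof. by rewrite sqr_sqrtr // dotv_ge0. Qed.
Lemma enormZ a v : enorm (a *: v) = `|a| * enorm v.
Proof. by rewrite /enorm dotvZl dotvZr mulrA -expr2 sqrtrM ?sqr_ge0 // sqrtr_sqr. Qed.
Lemma enorm_eq0 v : enorm v = 0 -> v = 0.
Proof.
move=> h; have : dotv v v = 0 by rewrite -enorm_sq h expr0n.
move/eqP; rewrite /dotv psumr_eq0; last by move=> i _; rewrite -expr2 sqr_ge0.
move/allP => H; apply/rowP => i; rewrite !mxE.
by have := H i (mem_index_enum _); rewrite -expr2 sqrf_eq0 => /eqP.
Qed.
End D.
Lemma int_scale (R : realType) k (K : set 'rV[R]_k) y t :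
  convex_set_of K -> interior K 0 -> K y -> 0 <= t < 1 -> interior K (t *: y).
Proof.
move=> cK /nbhs_ballP [e e0 eK] Ky /andP [t0 t1].
have t1' : 0 < 1 - t by rewrite subr_gt0.
apply/nbhs_ballP; exists ((1 - t) * e); first by apply: mulr_gt0.
move=> z; rewrite -ball_normE /= => hz.
set w := (1 - t)^-1 *: (z - t *: y).
have Kw : K w.
  apply: eK; rewrite -ball_normE /= /w sub0r normrN normrZ.
  rewrite ger0_norm ?invr_ge0 ?ltW // (distrC z).
  by rewrite ltr_pdivrMl // mulrC.
have -> : z = t *: y + (1 - t) *: w.
  by rewrite /w scalerA mulfV ?gt_eqF // scale1r addrC subrK.
by apply: cK => //; rewrite t0 ltW.
Qed.

Lemma dotv_unit (R : realType) k (x : 'rV[R]_k) : enorm x = 1 -> dotv x x = 1.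
Proof. by move=> h; rewrite -enorm_sq h expr1n. Qed.

Lemma rho_pos (R : realType) n (K : set 'rV[R]_n.+1) rho x :
  interior K 0 -> is_radial_function K rho -> unit_sphere R n x -> 0 < rho x.
Proof.
move=> i0 hr ux; have [h0 [_ hb]] := hr x ux.
rewrite lt_neqAle h0 andbT; apply/negP => /eqP h.
by apply: hb; rewrite -h scale0r.
Qed.

Lemma radial_bound (R : realType) n (K : set 'rV[R]_n.+1) rho y :
  convex_set_of K -> interior K 0 -> is_radial_function K rho -> K y -> y != 0 ->
  unit_sphere R n ((enorm y)^-1 *: y) /\ enorm y <= rho ((enorm y)^-1 *: y).
Proof.
move=> cK i0 hr Ky y0.
have ny0 : enorm y != 0 by apply/negP => /eqP /enorm_eq0 /eqP; rewrite (negbTE y0).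
have ny : 0 < enorm y by rewrite lt_neqAle eq_sym ny0 enorm_ge0.
set x := (enorm y)^-1 *: y.
have ux : unit_sphere R n x.
  by rewrite /unit_sphere /= /x enormZ ger0_norm ?invr_ge0 ?enorm_ge0 // mulVf.
split => //; rewrite leNgt; apply/negP => hlt.
have [h0 [_ hb]] := hr x ux.
apply: hb.
have -> : rho x *: x = (rho x / enorm y) *: y by rewrite /x scalerA.
apply: int_scale => //; rewrite divr_ge0 ?enorm_ge0 //=.
by rewrite ltr_pdivrMr // mul1r.
Qed.

Lemma support_ext (R : realType) n (K : set 'rV[R]_n.+1) rho M c :
  convex_set_of K -> interior K 0 -> is_radial_function K rho -> 0 <= c ->
  (forall z, unit_sphere R n z -> rho z * dotv M z <= c) ->
  forall y, K y -> dotv M y <= c.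
Proof.
move=> cK i0 hr c0 H y Ky.
have [->|y0] := eqVneq y 0; first by rewrite dotv0r.
have [uz hle] := @radial_bound R n K rho y cK i0 hr Ky y0.
set z := (enorm y)^-1 *: y in uz hle.
have ny0 : enorm y != 0 by apply/negP => /eqP /enorm_eq0 /eqP; rewrite (negbTE y0).
have -> : y = enorm y *: z by rewrite /z scalerA mulfV // scale1r.
rewrite dotvZr.
have [d0|d0] := leP (dotv M z) 0.
  by apply: le_trans c0; rewrite mulr_ge0_le0 ?enorm_ge0.
by apply: le_trans (H z uz); rewrite ler_pM2r.
Qed.

Lemma orth_norm (R : realType) k (x v : 'rV[R]_k) r :
  dotv x x = 1 -> dotv v x = 0 ->
  enorm v ^+ 2 + r ^+ 2 = dotv (- v + r *: x) (- v + r *: x).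
Proof.
move=> xx vx; rewrite enorm_sq !dotvDl !dotvDr !dotvNl !dotvNr !dotvZl !dotvZr.
rewrite xx vx (dotvC x v) vx; rewrite expr2; ring.
Qed.

Lemma q_pos (R : realType) k (v : 'rV[R]_k) r : 0 < r -> 0 < Num.sqrt (enorm v ^+ 2 + r ^+ 2).
Proof.
move=> r0; rewrite sqrtr_gt0; apply: ltr_wpDl; first exact: sqr_ge0.
exact: exprn_gt0.
Qed.

Theorem corollary10 (R : realType) (n : nat) (hn : (1 <= n)%N)
  (K : set 'rV[R]_(n.+1)) (rho : 'rV[R]_(n.+1) -> R) :
  convex_body0 K -> is_radial_function K rho ->
  forall x, unit_sphere R n x ->
    (forall N, gauss_map K rho x N ->
       exists! v, subdiff rho x v /\ N = normal_of (rho x) x v) /\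
    gauss_map K rho x = [set normal_of (rho x) x v | v in subdiff rho x].
Proof.
move=> [cpt [cK i0]] hr x ux.
have xx : dotv x x = 1 := dotv_unit ux.
have r0 : 0 < rho x := rho_pos i0 hr ux.
have clK : closed K := compact_closed (@norm_hausdorff _ _) cpt.
have inK : forall z, unit_sphere R n z -> K (rho z *: z).
  move=> z uz; have [_ [hc _]] := hr z uz.
  by move: hc; rewrite -(closure_id K).1.
set r := rho x in r0 *.
have uniq_v : forall N v, subdiff rho x v -> N = normal_of r x v ->
   v = r *: x - (r / dotv N x) *: N.
  move=> N v [vx _] ->; rewrite /normal_of.
  have q0 := q_pos v r0.
  set q := Num.sqrt _ in q0 *.
  set w := - v + r *: x.
  have wx : dotv w x = r by rewrite /w dotvDl dotvNl dotvZl vx xx oppr0 add0r mulr1.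
  rewrite dotvZl wx.
  have -> : r / (q^-1 * r) = q by field; rewrite !gt_eqF.
  by rewrite scalerA mulfV ?gt_eqF // scale1r /w opprD opprK addrCA subrr addr0.
have sub_gauss : forall v, subdiff rho x v -> gauss_map K rho x (normal_of r x v).
  move=> v [vx hv]; rewrite /normal_of.
  have q0 := q_pos v r0.
  have ww := orth_norm r xx vx.
  set q := Num.sqrt _ in q0 *.
  set w := - v + r *: x in ww *.
  have wx : dotv w x = r by rewrite /w dotvDl dotvNl dotvZl vx xx oppr0 add0r mulr1.
  have ew : enorm w = q by rewrite /enorm -ww.
  split.
    by rewrite enormZ ew ger0_norm ?invr_ge0 ?ltW // mulVf // gt_eqF.
  move=> y Ky; rewrite !dotvZl dotvZr wx ler_pM2l ?invr_gt0 // -expr2.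
  exact: (support_ext cK i0 hr (sqr_ge0 r) hv).
have partA : forall N, gauss_map K rho x N ->
       exists! v, subdiff rho x v /\ N = normal_of r x v.
  move=> N [nN hN].
  have NN : dotv N N = 1 := dotv_unit nN.
  have pos : 0 < dotv N (r *: x).
    move: i0 => /nbhs_ballP [e e0 eK].
    have h1 : 0 < `|N| + 1 by apply: ltr_wpDl; [exact: normr_ge0 | exact: ltr01].
    set d := e / (`|N| + 1).
    have d0 : 0 < d by rewrite divr_gt0.
    have Kd : K (d *: N).
      apply: eK; rewrite -ball_normE /= sub0r normrN normrZ gtr0_norm //.
      by rewrite /d mulrAC ltr_pdivrMr // ltr_pM2l // ltrDl ltr01.
    by apply: lt_le_trans (hN _ Kd); rewrite dotvZr NN mulr1.
  have c0 : 0 < dotv N x by move: pos; rewrite dotvZr pmulr_rgt0.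
  set c := dotv N x in c0 *.
  set v := r *: x - (r / c) *: N.
  have vx : dotv v x = 0.
    by rewrite /v dotvDl dotvNl !dotvZl xx -/c mulr1 divfK ?gt_eqF // subrr.
  have wN : - v + r *: x = (r / c) *: N by rewrite /v opprB subrK.
  have sv : subdiff rho x v.
    split => // z uz; rewrite wN dotvZl mulrCA -dotvZr.
    apply: le_trans (ler_wpM2l _ (hN _ (inK z uz))) _.
      by rewrite divr_ge0 ?ltW.
    rewrite dotvZr -/c.
    have -> : r / c * (r * c) = r ^+ 2 by field; rewrite !gt_eqF.
    by [].
  have Neq : N = normal_of r x v.
    rewrite /normal_of (orth_norm r xx vx) wN dotvZl dotvZr NN mulr1 -expr2.
    rewrite sqrtr_sqr gtr0_norm ?divr_gt0 // scalerA mulVf ?scale1r //.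
    by rewrite gt_eqF // divr_gt0.
  exists v; split; first by split.
  move=> v' [sv' e']; by rewrite (uniq_v N v' sv' e').
split; first exact: partA.
rewrite eqEsubset; split.
  move=> N gN; have [v [[sv e] _]] := partA N gN.
  by exists v => //; rewrite e.
by move=> _ [v sv <-]; exact: sub_gauss.
Qed.
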